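(* Let $N\ge 0$, $k\ge1$ be integers and $f:\{0,\dots,N\}^k\to\{\mathbf{true},\mathbf{false}\}$ a feasibility function. Then $\textsc{ParetoEnumerate}(N,k,f)$ (with arbitrary choices of the picked element in each iteration) terminates, and at the end of its main loop the set $P$ it returns is exactly the set of all Pareto points of $f$.
   Context: For $\vec x,\vec x'\in\{0,\dots,N\}^k$, $\vec x\le_k\vec x'$ iff $x_i\le x'_i$ for all $i$; $\vec x$ is smaller than $\vec x'$ (and $\vec x'$ greater than $\vec x$) if $\vec x\le_k\vec x'$ and $\vec x\neq\vec x'$. A feasibility function is a monotone $f:\{0,\dots,N\}^k\to\{\mathbf{true},\mathbf{false}\}$: if $f(\vec x)=\mathbf{true}$ then $f(\vec x')=\mathbf{true}$ for all $\vec x'$ greater than $\vec x$. A Pareto point of $f$ is an $\vec x$ with $f(\vec x)=\mathbf{true}$ and $f(\vec x')=\mathbf{false}$ for all $\vec x'$ smaller than $\vec x$. Procedure $\textsc{SearchParetoPoint}(\vec x,k,f)$: for $i=1,\dots,k$: set $\mathit{max}:=x_i+1$, $\mathit{min}:=0$; while $\mathit{max}-\mathit{min}>1$: $\mathit{mid}:=\mathit{min}+\lfloor(\mathit{max}-\mathit{min}-1)/2\rfloor$, $x_i:=\mathit{mid}$, and if $f(\vec x)=\mathbf{true}$ then $\mathit{max}:=\mathit{mid}+1$ else $\mathit{min}:=\mathit{mid}+1$; then $x_i:=\mathit{min}$. Return $\vec x$. Procedure $\textsc{ParetoEnumerate}(N,k,f)$: initialize $S:=\{(N,\dots,N)\}$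 and $P:=\emptyset$. Main loop: while $S\neq\emptyset$: pick (without removing) some $\vec x\in S$; if $f(\vec x)=\mathbf{true}$, then set $\vec x:=\textsc{SearchParetoPoint}(\vec x,k,f)$, set $P:=P\cup\{\vec x\}$, set $S':=\emptyset$, and for each $\vec y\in S$: if not $\vec x\le_k\vec y$, add $\vec y$ to $S'$; otherwise, for each $i\in\{1,\dots,k\}$ with $x_i>0$, add $(y_1,\dots,y_{i-1},x_i-1,y_{i+1},\dots,y_k)$ to $S'$; then set $S$ to the set of elements of $S'$ that are not smaller than any other element of $S'$. Otherwise (if $f(\vec x)=\mathbf{false}$), set $S:=S\setminus\{\vec x\}$. When the loop ends, return $P$. *)

(* Defs.v *)
From mathcomp Require Import all_boot.
From Stdlib Require Import Relations.
Set Implicit Arguments. Unset Strict Implicit. Unset Printing Implicit Defensive.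

(* Vectors in {0,...,N}^k : coordinates indexed by 'I_k (coordinate i+1 of
   the paper is index i here), values in 'I_N.+1 = {0,...,N}. *)
Definition vec (N k : nat) := {ffun 'I_k -> 'I_N.+1}.

Section Pareto.
Variables (N k : nat).
Local Notation V := (vec N k).

Definition lek (x x' : V) : bool := [forall i, x i <= x' i].
Definition smaller (x x' : V) : bool := lek x x' && (x != x').

Definition feasibility (f : V -> bool) : Prop :=
  forall x x' : V, smaller x x' -> f x -> f x'.

Definition pareto_points (f : V -> bool) : {set V} :=
  [set x | f x && [forall x', smaller x' x ==> ~~ f x']].

Definition set_coord (x : V) (i : 'I_k) (v : 'I_N.+1) : V :=
  [ffun j => if j == i then v else x j].

Variable f : V -> bool.

(* The inner while loop of SearchParetoPoint for coordinate i, run with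
   [fuel] iterations at most; returns the final value of [min].
   Each iteration strictly decreases max - min, so fuel = x_i + 1 (the
   initial value of max - min) is always enough: the fuel never runs out. *)
Fixpoint bsearch (x : V) (i : 'I_k) (fuel mn mx : nat) : nat :=
  match fuel with
  | 0 => mn
  | fuel'.+1 =>
      if 1 < mx - mn then
        let mid := mn + (mx - mn - 1) %/ 2 in
        if f (set_coord x i (inord mid)) then bsearch x i fuel' mn mid.+1
        else bsearch x i fuel' mid.+1 mx
      else mn
  end.

(* one iteration of the for loop: max := x_i + 1, min := 0, loop, x_i := min *)
Definition search_coord (x : V) (i : 'I_k) : V :=
  set_coord x i (inord (bsearch x i (x i).+1 0 (x i).+1)).

Definition SearchParetoPoint (x : V) : V :=
  foldl search_coord x (enum 'I_k).

Definition update_S (S : {set V}) (x : V) : {set V} :=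
  let S' := \bigcup_(y in S)
              (if ~~ lek x y then [set y]
               else [set set_coord y i (inord (x i).-1) | i in [set i | 0 < x i]]) in
  [set y in S' | ~~ [exists z in S', smaller y z]].

Definition state := ({set V} * {set V})%type.

Definition init_state : state := ([set [ffun _ => ord_max]], set0).

Inductive step : state -> state -> Prop :=
| step_true (S P : {set V}) (x : V) :
    x \in S -> f x ->
    step (S, P) (update_S S (SearchParetoPoint x), P :|: [set SearchParetoPoint x])
| step_false (S P : {set V}) (x : V) :
    x \in S -> ~~ f x ->
    step (S, P) (S :\ x, P).

(* Termination for every choice sequence: no infinite chain of steps *)
Definition terminates : Prop := Acc (fun t s => step s t) init_state.

Definition reachable (s : state) : Prop := clos_refl_trans state step init_state s.

End Pareto.

(* Main.v *)
Require Import Defs.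
From mathcomp Require Import all_boot.
From mathcomp Require Import zify.
From Stdlib Require Import Relations.
Set Implicit Arguments. Unset Strict Implicit. Unset Printing Implicit Defensive.

Section Proof.
Variables (N k : nat) (f : vec N k -> bool).
Hypothesis Hf : feasibility f.
Local Notation V := (vec N k).

Lemma lek_refl (x : V) : lek x x.
Proof. by apply/forallP=> i. Qed.

Lemma lek_trans (x y z : V) : lek x y -> lek y z -> lek x z.
Proof.
move=> /forallP H1 /forallP H2; apply/forallP=> i; exact: leq_trans (H1 i) (H2 i).
Qed.

Lemma lek_anti (x y : V) : lek x y -> lek y x -> x = y.
Proof.
move=> /forallP H1 /forallP H2; apply/ffunP=> i; apply/val_inj/eqP.
by rewrite eqn_leq H1 H2.
Qed.

Lemma mono (x y : V) : lek x y -> f x -> f y.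
Proof.
move=> Hxy Hx; case: (eqVneq x y) => [<- //|Hne].
by apply: (Hf (x:=x)) => //; rewrite /smaller Hxy Hne.
Qed.

Lemma not_lek (x y : V) : ~~ lek x y -> exists i, y i < x i.
Proof. by move/forallPn => [i Hi]; exists i; rewrite ltnNge. Qed.

Lemma smaller_ex (x y : V) : smaller x y -> exists i, x i < y i.
Proof.
case/andP=> Hxy Hne.
case: (boolP (lek y x)) => H.
  by rewrite (lek_anti Hxy H) eqxx in Hne.
by case: (not_lek H) => i Hi; exists i.
Qed.

Lemma set_coordE (x : V) i v j : set_coord x i v j = if j == i then v else x j.
Proof. by rewrite /set_coord ffunE. Qed.

Lemma inP (a : 'I_N.+1) : nat_of_ord (inord (a.-1) : 'I_N.+1) = a.-1.
Proof. rewrite inordK //; have := ltn_ord a; lia. Qed.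

Section BS.
Variables (x : V) (i : 'I_k).
Let g v := f (set_coord x i (inord v)).
Lemma g_mono v w : v <= w -> w <= N -> g v -> g w.
Proof.
move=> Hvw HwN; apply: mono; apply/forallP=> j; rewrite !set_coordE.
case: (j == i) => //; rewrite !inordK; lia.
Qed.

Lemma bsearch_spec fuel mn mx :
  mn < mx -> mx <= N.+1 -> mx - mn <= fuel.+1 -> g mx.-1 ->
  (forall v, v < mn -> ~~ g v) ->
  [/\ bsearch f x i fuel mn mx < mx, g (bsearch f x i fuel mn mx)
    & forall v, v < bsearch f x i fuel mn mx -> ~~ g v].
Proof.
elim: fuel mn mx => [|fuel IH] mn mx H1 H2 H3 H4 H5 /=.
  have E : mn = mx.-1 by lia.
  by split => //; rewrite E.
case: ifP => Hd; last first.
  have E : mn = mx.-1 by lia.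
  by split => //; rewrite E.
case: ifP => Hg.
  have [] := IH mn (mn + (mx - mn - 1) %/ 2).+1 _ _ _ Hg H5; try lia.
  move=> Ha Hb Hc; split => //; lia.
have [] := IH (mn + (mx - mn - 1) %/ 2).+1 mx _ H2 _ H4; try lia.
- move=> v Hv; case: (ltnP v mn) => Hvm; first exact: H5.
  apply/negP => Hgv.
  have H6 : v <= mn + (mx - mn - 1) %/ 2 by lia.
  have H7 : mn + (mx - mn - 1) %/ 2 <= N by lia.
  by have := g_mono H6 H7 Hgv; rewrite /g Hg.
- by move=> Ha Hb Hc; split.
Qed.
End BS.

Lemma search_coord_spec (x : V) i : f x ->
  [/\ f (search_coord f x i), lek (search_coord f x i) x &
      forall z, lek z x -> z i < search_coord f x i i -> ~~ f z].
Proof.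
move=> Hx.
have Ex : set_coord x i (inord (x i)) = x.
  apply/ffunP => j; rewrite set_coordE; case: eqP => [->|] //.
  by apply/val_inj; rewrite /= inordK.
have [] := bsearch_spec (x:=x) (i:=i) (fuel := (x i).+1) (mn:=0) (mx := (x i).+1).
- by [].
- exact: ltn_ord.
- lia.
- by rewrite /= Ex.
- by [].
rewrite /search_coord.
set r := bsearch f x i (x i).+1 0 (x i).+1 => Hr Hg Hlow.
have HrN : r < N.+1 by have := ltn_ord (x i); lia.
split => //.
  apply/forallP => j; rewrite set_coordE; case: eqP => [->|//].
  by rewrite inordK.
move=> z Hz; rewrite set_coordE eqxx inordK // => Hzi.
apply/negP => Hfz; move/negP: (Hlow _ Hzi); apply.
apply: (mono _ Hfz); apply/forallP => j; rewrite set_coordE; case: eqP => [->|_].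
  by rewrite inordK.
exact: (forallP Hz j).
Qed.

Lemma fold_spec (s : seq 'I_k) (x : V) : f x ->
  [/\ f (foldl (search_coord f) x s), lek (foldl (search_coord f) x s) x &
   forall i, i \in s -> forall z, lek z (foldl (search_coord f) x s) ->
     z i < foldl (search_coord f) x s i -> ~~ f z].
Proof.
elim: s x => [|a s IH] x Hx /=.
  by split => //; exact: lek_refl.
have [Hx' Hle Hlow] := search_coord_spec a Hx.
have [Hy Hyle Hylow] := IH _ Hx'.
split; [done | exact: lek_trans Hyle Hle | ].
move=> j; rewrite inE => /orP [/eqP -> | Hj] z Hz Hzj.
  apply: Hlow; first exact: lek_trans Hz (lek_trans Hyle Hle).
  exact: (leq_trans Hzj (forallP Hyle a)).
exact: (Hylow j Hj z Hz Hzj).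
Qed.

Lemma SPP_spec (x : V) : f x ->
  lek (SearchParetoPoint f x) x /\ SearchParetoPoint f x \in pareto_points f.
Proof.
move=> Hx; rewrite /SearchParetoPoint.
have [Hy Hle Hlow] := fold_spec (enum 'I_k) Hx.
split => //; rewrite inE Hy /=; apply/forallP => z; apply/implyP => Hs.
case: (smaller_ex Hs) => i Hi.
apply: (Hlow i) => //; first by rewrite mem_enum.
by case/andP: Hs.
Qed.

Definition covered (S : {set V}) (z : V) := [exists y in S, lek z y].
Lemma coveredP (S : {set V}) (z : V) : reflect (exists2 y, y \in S & lek z y) (covered S z).
Proof. exact: (iffP exists_inP). Qed.

Definition Sprime (S : {set V}) (x : V) : {set V} :=
  \bigcup_(y in S) (if ~~ lek x y then [set y]
     else [set set_coord y i (inord (x i).-1) | i in [set i | 0 < x i]]).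

Lemma update_SE (S : {set V}) (x : V) :
  update_S S x = [set y in Sprime S x | ~~ [exists z in Sprime S x, smaller y z]].
Proof. by []. Qed.

Definition wsum (x : V) := \sum_i (x i : nat).
Lemma smaller_sum (x y : V) : smaller x y -> wsum x < wsum y.
Proof.
move=> Hs; case: (smaller_ex Hs) => i Hi; case/andP: Hs => /forallP Hle _.
rewrite /wsum (bigD1 i) //= [X in _ < X](bigD1 i) //=.
rewrite -addSn leq_add // leq_sum // => j _; exact: Hle.
Qed.

Lemma max_exists (A : {set V}) u : u \in A ->
  exists2 v, v \in [set y in A | ~~ [exists z in A, smaller y z]] & lek u v.
Proof.
move=> Hu.
pose B := [set w in A | lek u w].
have HuB : u \in B by rewrite inE Hu lek_refl.
case: (@arg_maxnP _ u (fun w => w \in B) wsum HuB) => v.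
rewrite inE => /andP [HvA Huv] Hmax.
exists v => //; rewrite inE HvA /=; apply/negP => /exists_inP [z Hz Hvz].
have := Hmax z; rewrite inE Hz (lek_trans Huv (proj1 (andP Hvz))) => /(_ isT) H.
by have := smaller_sum Hvz; rewrite ltnNge; move: H => /= ->.
Qed.

Lemma covered_update (S : {set V}) (x z : V) : covered (update_S S x) z = covered (Sprime S x) z.
Proof.
apply/coveredP/coveredP => [[y Hy Hzy]|[y Hy Hzy]].
  by exists y => //; move: Hy; rewrite update_SE inE => /andP[].
case: (max_exists Hy) => v Hv Hyv; exists v; first by rewrite update_SE.
exact: lek_trans Hzy Hyv.
Qed.

Lemma SprimeP (S : {set V}) (x u : V) : u \in Sprime S x ->
  exists2 w, w \in S & (if ~~ lek x w then u = w
     else exists2 i, 0 < x i & u = set_coord w i (inord (x i).-1)).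
Proof.
move=> /bigcupP [w Hw Hu]; exists w => //; move: Hu.
case: (boolP (lek x w)) => H /=.
  by case/imsetP => i; rewrite inE => Hi ->; exists i.
by move/set1P.
Qed.

Lemma Sprime_keep (S : {set V}) (x w : V) : w \in S -> ~~ lek x w -> w \in Sprime S x.
Proof. by move=> Hw Hn; apply/bigcupP; exists w => //; rewrite Hn set11. Qed.

Lemma Sprime_cut (S : {set V}) (x w : V) i : w \in S -> lek x w -> 0 < x i ->
  set_coord w i (inord (x i).-1) \in Sprime S x.
Proof.
move=> Hw Hl Hi; apply/bigcupP; exists w => //; rewrite Hl /=.
by apply/imsetP; exists i; rewrite // inE.
Qed.

Definition I3 (s : state N k) := forall p, p \in s.2 -> ~~ covered s.1 p.
Definition mu (s : state N k) := #|~: s.2| * #|[set: V]|.+1 + #|s.1|.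

Lemma step_inv s t : step f s t -> I3 s -> I3 t /\ mu t < mu s.
Proof.
case=> {s t} S P x Hx Hfx HI.
- set y := SearchParetoPoint f x.
  have [Hyx Hpar] := SPP_spec Hfx.
  have HyP : y \notin P.
    apply/negP => HyP; have := HI _ HyP; rewrite /= => /negP; apply.
    by apply/coveredP; exists x.
  split.
  + move=> p; rewrite /= covered_update inE => Hp; apply/negP => /coveredP [u Hu Hpu].
    case: (SprimeP Hu) => w Hw.
    case: (boolP (lek y w)) => Hyw /=.
    * case=> j Hj Eu; subst u.
      case/orP: Hp => [Hp|/set1P Ep].
      -- have := HI _ Hp; rewrite /= => /negP; apply; apply/coveredP; exists w => //.
         apply: lek_trans Hpu _; apply/forallP => l; rewrite set_coordE.
         case: eqP => [->|_] //; rewrite inP.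
         have := forallP Hyw j; lia.
      -- subst p; move/forallP: Hpu => /(_ j); rewrite set_coordE eqxx inP; lia.
    * move=> Eu; subst u.
      case/orP: Hp => [Hp|/set1P Ep].
      -- have := HI _ Hp; rewrite /= => /negP; apply; apply/coveredP; by exists w.
      -- by subst p; rewrite Hpu in Hyw.
  + rewrite /mu /=.
    have E1 : #|~: (P :|: [set y])| + 1 = #|~: P|.
      rewrite setCU -setDE (cardsD1 y (~: P)) inE HyP /= addnC.
      by [].
    have Hle : #|update_S S y| <= #|[set: V]| by apply: subset_leq_card; apply: subsetT.
    rewrite -E1 mulnDl mul1n -addnA ltn_add2l; exact: ltn_addr.
- split.
  + move=> p /= Hp; apply/negP => /coveredP [w]; rewrite inE => /andP [_ Hw] Hpw.
    have := HI _ Hp; rewrite /= => /negP; apply; apply/coveredP; by exists w.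
  + rewrite /mu /= [#|S|](cardsD1 x) Hx ltn_add2l; exact: leqnn.
Qed.

Lemma acc_I3 n s : mu s <= n -> I3 s -> Acc (fun t s => step f s t) s.
Proof.
elim: n s => [|n IH] s Hmu HI; constructor => t Hst;
  have [HIt Hlt] := step_inv Hst HI.
  lia.
apply: IH => //; lia.
Qed.

Definition Inv (s : state N k) := s.2 \subset pareto_points f /\
  forall p, p \in pareto_points f -> p \notin s.2 -> covered s.1 p.

Lemma step_Inv s t : step f s t -> Inv s -> Inv t.
Proof.
case=> {s t} S P x Hx Hfx [HI1 HI2].
- set y := SearchParetoPoint f x.
  have [Hyx Hpar] := SPP_spec Hfx.
  have Hfy : f y by move: Hpar; rewrite inE => /andP[].
  split.
  + by rewrite /= subUset HI1 sub1set Hpar.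
  + move=> p Hp; rewrite /= inE negb_or => /andP [HpP Hpy].
    rewrite covered_update.
    case/coveredP: (HI2 _ Hp HpP) => w Hw Hpw.
    case: (boolP (lek y w)) => Hyw; last first.
      by apply/coveredP; exists w => //; exact: Sprime_keep.
    have : ~~ lek y p.
      apply/negP => Hyp; move: Hp; rewrite inE => /andP [_ /forallP /(_ y)].
      rewrite /smaller Hyp eq_sym.
      by rewrite in_set1 in Hpy; rewrite Hpy Hfy.
    case/not_lek => j Hj.
    apply/coveredP; exists (set_coord w j (inord (y j).-1)).
      by apply: Sprime_cut => //; lia.
    apply/forallP => l; rewrite set_coordE; case: eqP => [->|_].
      rewrite inP; lia.
    exact: (forallP Hpw l).
- split; first by [].
  move=> p Hp HpP; case/coveredP: (HI2 _ Hp HpP) => w Hw Hpw; apply/coveredP.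
  exists w => //; rewrite in_setD1 Hw andbT; apply/negP => /eqP Ewx; rewrite Ewx in Hpw.
  move: Hp; rewrite inE => /andP [Hfp _].
  move: Hfx; rewrite (mono Hpw Hfp); done.
Qed.

Lemma reach_Inv s : reachable f s -> Inv s.
Proof.
rewrite /reachable => H.
have gen : forall a b, clos_refl_trans _ (step f) a b -> Inv a -> Inv b.
  move=> a b Hab; elim: Hab => //.
  - by move=> a0 b0 Hs; exact: step_Inv.
  - by move=> a0 b0 c0 _ H1 _ H2 Ha; exact: H2 (H1 Ha).
apply: gen H _; split; first by rewrite sub0set.
move=> p _ _; apply/coveredP; exists [ffun _ => ord_max]; first by rewrite /= set11.
by apply/forallP => i; rewrite ffunE; exact: leq_ord.
Qed.

End Proof.

Theorem corollary1 (N k : nat) (f : vec N k -> bool) :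
  0 < k -> feasibility f ->
  terminates f /\
  (forall s : state N k, reachable f s -> s.1 = set0 ->
     s.2 = pareto_points f).
Proof.
move=> _ Hf; split.
  apply: (acc_I3 Hf (n := mu (init_state N k))) => //.
  by move=> p; rewrite /= inE.
move=> s Hs Hs1; have [H1 H2] := reach_Inv Hf Hs.
apply/eqP; rewrite eqEsubset H1 /=; apply/subsetP => p Hp.
apply/negPn/negP => HpP; have := H2 _ Hp HpP; rewrite Hs1.
by case/coveredP => w; rewrite inE.
Qed.
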